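(* Let $\mu$ be a distribution over $X\times\mathbb{R}$, let $f_1:X\to\mathbb{R}$ and $b:X\to[-1,1]\cup\{*\}$. Assume \[ \mathbb{E}_{(x,y)\sim\mu}[(y-f_1(x))\diamondsuit b(x)]\le\alpha\quad\text{and}\quad\mathbb{E}_{(x,y)\sim\mu}[(f_1(x)-y)\,\mathrm{sign}(f_1(x))]\le\varepsilon. \] Then $\mathbb{E}_{(x,y)\sim\mu}[y\,\mathrm{sign}(f_1(x))]\ge\mathbb{E}_{(x,y)\sim\mu}[y\diamondsuit b(x)]-\alpha-\varepsilon$.
   Context: Distributions are discrete (countable support). For $u_1\in\mathbb{R}$, $u_2\in[-1,1]\cup\{*\}$, the generalized product is $u_1\diamondsuit u_2=u_1u_2$ if $u_2\in[-1,1]$ and $-|u_1|$ if $u_2=*$. $\mathrm{sign}(u)=1$ if $u\ge0$ and $-1$ if $u<0$. *)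

(* Defs.v *)
From Stdlib Require Import Reals.
From Coquelicot Require Import Coquelicot.
Open Scope R_scope.

(* [-1,1] ∪ {*} : Some v with -1 <= v <= 1, or None for * *)
Definition star_valued {X : Type} (b : X -> option R) : Prop :=
  forall x v, b x = Some v -> -1 <= v <= 1.

Definition gprod (u1 : R) (u2 : option R) : R :=
  match u2 with Some v => u1 * v | None => - Rabs u1 end.

Definition sgn (u : R) : R := if Rle_dec 0 u then 1 else -1.

(* A discrete (countable-support) distribution over T, given by atoms
   a n with weights w n (n : nat); weights nonnegative, summing to 1. *)
Definition is_discrete_distr {T : Type} (w : nat -> R) (a : nat -> T) : Prop :=
  (forall n, 0 <= w n) /\ is_series w 1.

Definition has_expect {T : Type} (w : nat -> R) (a : nat -> T) (g : T -> R) : Prop :=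
  ex_series (fun n => Rabs (w n * g (a n))).

Definition expect {T : Type} (w : nat -> R) (a : nat -> T) (g : T -> R) : R :=
  Series (fun n => w n * g (a n)).

(* Main.v *)
Require Import Defs.
From Stdlib Require Import Reals Lra.
From Coquelicot Require Import Coquelicot.
Open Scope R_scope.

Lemma pointwise (f y : R) (bv : option R) :
  (forall v, bv = Some v -> -1 <= v <= 1) ->
  y * sgn f + (f - y) * sgn f + gprod (y - f) bv - gprod y bv >= 0.
Proof.
  intros Hb.
  assert (Hf : y * sgn f + (f - y) * sgn f = Rabs f).
  { unfold sgn; destruct (Rle_dec 0 f).
    - rewrite Rabs_right by lra; ring.
    - rewrite Rabs_left by lra; ring. }
  rewrite Hf. destruct bv as [v|]; simpl.
  - specialize (Hb v eq_refl).
    destruct (Rle_dec 0 f).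
    + rewrite Rabs_right by lra.
      assert (0 <= (1 - v) * f) by (apply Rmult_le_pos; lra). replace (f + (y - f) * v - y * v) with ((1 - v) * f) by ring. lra.
    + rewrite Rabs_left by lra.
      assert (0 <= (1 + v) * (- f)) by (apply Rmult_le_pos; lra). replace (- f + (y - f) * v - y * v) with ((1 + v) * - f) by ring. lra.
  - pose proof (Rabs_triang y (- f)) as T.
    rewrite Rabs_Ropp in T. unfold Rminus. lra.
Qed.

Theorem lemma6p3 (X : Type) (w : nat -> R) (a : nat -> X * R)
  (f1 : X -> R) (b : X -> option R) (alpha eps : R) :
  is_discrete_distr w a ->
  star_valued b ->
  has_expect w a (fun p => gprod (snd p - f1 (fst p)) (b (fst p))) ->
  has_expect w a (fun p => (f1 (fst p) - snd p) * sgn (f1 (fst p))) ->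
  has_expect w a (fun p => snd p * sgn (f1 (fst p))) ->
  has_expect w a (fun p => gprod (snd p) (b (fst p))) ->
  expect w a (fun p => gprod (snd p - f1 (fst p)) (b (fst p))) <= alpha ->
  expect w a (fun p => (f1 (fst p) - snd p) * sgn (f1 (fst p))) <= eps ->
  expect w a (fun p => snd p * sgn (f1 (fst p)))
    >= expect w a (fun p => gprod (snd p) (b (fst p))) - alpha - eps.
Proof.
  intros [Hw _] Hb H1 H2 H3 H4 E1 E2.
  unfold has_expect, expect in *.
  apply ex_series_Rabs in H1. apply ex_series_Rabs in H2.
  apply ex_series_Rabs in H3. apply ex_series_Rabs in H4.
  set (A := fun n => w n * (snd (a n) * sgn (f1 (fst (a n))))) in *.
  set (B := fun n => w n * ((f1 (fst (a n)) - snd (a n)) * sgn (f1 (fst (a n))))) in *.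
  set (C := fun n => w n * gprod (snd (a n) - f1 (fst (a n))) (b (fst (a n)))) in *.
  set (D := fun n => w n * gprod (snd (a n)) (b (fst (a n)))) in *.
  set (E := fun n => A n + B n + C n - D n).
  assert (HAB : ex_series (fun n => A n + B n)) by (apply (ex_series_plus A B); auto).
  assert (HABC : ex_series (fun n => A n + B n + C n))
    by (apply (ex_series_plus (fun n => A n + B n) C); auto).
  assert (HE : ex_series E)
    by (apply (ex_series_minus (fun n => A n + B n + C n) D); auto).
  assert (SE : Series E = Series A + Series B + Series C - Series D).
  { unfold E. rewrite Series_minus by auto. rewrite Series_plus by auto.
    rewrite Series_plus by auto. reflexivity. }
  assert (Hle : Series (fun n => 0 * E n) <= Series E).
  { apply Series_le; auto. intro n. rewrite Rmult_0_l. split; [lra|].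
    unfold E, A, B, C, D.
    pose proof (pointwise (f1 (fst (a n))) (snd (a n)) (b (fst (a n))) (Hb (fst (a n)))) as P.
    pose proof (Hw n). nra. }
  rewrite Series_scal_l in Hle. lra.
Qed.
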